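(* Let $d$ be a prime power, $\mathbb{F}_d$ the finite field with $d$ elements, and $(p_{nm})_{n,m\in\mathbb{F}_d}$ a probability distribution on $\mathbb{F}_d\times\mathbb{F}_d$ (the Bell-diagonal probabilities of a two-qudit state, with $p_{00}$ the initial fidelity). Let $L_1,\dots,L_{d+1}$ be the sums of $p_{nm}$ over the $d+1$ lines through the origin, $\{(0,k):k\in\mathbb{F}_d\}$ and $\{(k,ak):k\in\mathbb{F}_d\}$ for $a\in\mathbb{F}_d$ (the weights of the $d+1$ mutually unbiased bases). If $p_{00}>\frac{d-1}{2d}$, then $\max_i L_i>1/2$; that is, the MUB-adapted mCAEPP satisfies the spectral dominance condition, so $p_{00}>\frac{d-1}{2d}$ is a sufficient initial-fidelity threshold for the MUB pre-processing strategy.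
   Context: Spectral dominance condition: after rotating the MUB line of maximal weight onto the primary (computational) axis by local operations, that primary axis carries weight $L_{\max}>1/2$. *)

(* Defs.v *)
From mathcomp Require Import all_boot all_order all_algebra all_field.
Set Implicit Arguments. Unset Strict Implicit. Unset Printing Implicit Defensive.
Import Order.TTheory GRing.Theory Num.Theory.
Local Open Scope ring_scope.

(* Lines through the origin of F x F, indexed by option F:
   None    |-> {(0,k) : k in F}
   Some a  |-> {(k, a k) : k in F}. *)
Definition line_weight (F : finFieldType) (R : realFieldType)
  (p : F -> F -> R) (l : option F) : R :=
  match l with
  | None => \sum_(k : F) p 0 k
  | Some a => \sum_(k : F) p k (a * k)
  end.

(* L_max = max over the d+1 lines (weights are nonnegative, so 0 is a neutral start). *)
Definition L_max (F : finFieldType) (R : realFieldType) (p : F -> F -> R) : R :=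
  \big[Num.max/0]_(l : option F) line_weight p l.

(* Main.v *)
Require Import Defs.
From mathcomp Require Import all_boot all_order all_algebra all_field.
From mathcomp Require Import ring lra.
Import Order.TTheory GRing.Theory Num.Theory.
Local Open Scope ring_scope.

Lemma sum_lines (F : finFieldType) (R : realFieldType) (p : F -> F -> R) :
  \sum_(l : option F) line_weight p l =
  \sum_(n : F) \sum_(m : F) p n m + #|F|%:R * p 0 0.
Proof.
rewrite (bigD1 None) //= (reindex_onto Some (odflt 0)); last by case.
rewrite [X in _ + X](eq_bigl (fun _ => true)); last first.
  move=> a /=. exact: eqxx.
rewrite /line_weight.
rewrite exchange_big /=.
rewrite [X in _ + X](bigD1 (0 : F)) //= [in RHS](bigD1 (0 : F)) //=.
under [X in _ + (X + _)]eq_bigr do rewrite mulr0.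
rewrite sumr_const.
have -> : \sum_(k | k != 0) \sum_(a : F) p k (a * k) =
          \sum_(k | k != 0) \sum_(m : F) p k m.
  apply: eq_bigr => k hk.
  by rewrite [RHS](reindex_inj (mulIf hk)).
rewrite -mulr_natl (eq_card (B:=F)) //; lra.
Qed.

Theorem theorem3 (F : finFieldType) (R : realFieldType) (p : F -> F -> R)
  (p_ge0 : forall n m, 0 <= p n m)
  (p_sum1 : \sum_(n : F) \sum_(m : F) p n m = 1)
  (hfid : (#|F|%:R - 1) / (2 * #|F|%:R) < p 0 0) :
  1 / 2 < L_max p.
Proof.
have hle : \sum_(l : option F) line_weight p l <= \sum_(l : option F) L_max p.
  by apply: ler_sum => l _; apply: le_bigmax.
rewrite sum_lines p_sum1 sumr_const card_option in hle.
rewrite mulrS -mulr_natr in hle.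
have d0 : (0 : R) < #|F|%:R by rewrite ltr0n; apply/card_gt0P; exists 0.
set d := (#|F|%:R : R) in hle hfid d0.
have h2 : d - 1 < 2 * d * p 0 0.
  by move: hfid; rewrite ltr_pdivrMr ?mulr_gt0 // mulrC.
set L := L_max p in hle *.
set q := p 0 0 in hle h2.
rewrite -mulr_natr -/d mul1r in hle.
have h3 : 0 < (1 + d) * (2 * L - 1).
  have -> : (1 + d) * (2 * L - 1) = 2 * (L + L * d) - 1 - d by ring.
  have e : 2 * d * q = 2 * (d * q) by ring.
  clear -hle h2 e; lra.
have hd : 0 < 1 + d by clear -d0; lra.
rewrite pmulr_rgt0 // in h3; clear -h3; lra.
Qed.
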